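(* Consider a run of the algorithm described in the context, and assume the event $\mathcal E$ occurs. Then for every iteration $j$ of the run, $\mathcal G_j^*:=\mathcal G^*\cap\mathcal G_j\neq\emptyset$, where $\mathcal G^*=\{G\in\mathcal G_{d,k}:\mathcal S(G)=\mathcal S^*\}$.
   Context: Setting. $\mathbf{X}=(X_1,\dots,X_d)$ is a random vector; $k$ a fixed positive integer; natural logarithms. A family is $f=\langle X_i,\Pi\rangle$ with $\Pi\subseteq\{X_1,\dots,X_d\}\setminus\{X_i\}$, $|\Pi|\le k$; $\mathcal F_{d,k}$ the set of families; $H(f)=H(X_i\mid\Pi)$. $\mathcal G_{d,k}$ = DAGs over the variables with in-degree $\le k$, identified with their family sets; $\mathcal S(F)=-\sum_{f\in F}H(f)$; $\mathcal S^*=\max_{G\in\mathcal G_{d,k}}\mathcal S(G)$. $\mathcal E_{d,k}$ is the set of Markov equivalence classes (ECs) on $\mathcal G_{d,k}$ (graphs with identical conditional independence constraints); graphs in an EC share a score. Each sample is an independent copy of $\mathbf X$ of which only a chosen set of $k+1$ coordinates is revealed. $\hat H$ is an estimator of $H(f)$ from the samples where all variables of $f$ were observed, and $N(\epsilon,\delta)$ is such that for any fixed $f$, at least $N(\epsilon,\delta)$ such samples give $|\hat H(f)-H(f)|\le\epsilon$ with probability $\ge1-\delta$. Notation: $\mathcal F_{\mathrm{act}}(\mathcal V)$ = families whose child is not in $\mathcal V\subseteq[d]$; $\mathcal G_j=\{G\in\mathcal G_{d,k}:\mathcal A_j\subseteq G\}$; $E^{(j)}=E\cap\mathcal G_j$;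 $U(\mathcal A)=\bigcup_{G\in\mathcal A}G$; $\hat H_t(f)$ = estimate from all samples up to round $t$; $\hat{\mathcal S}_t(G)=-\sum_{f\in G}\hat H_t(f)$; $\hat{\mathcal S}_t(\mathcal A)=\max_{G\in\mathcal A}\hat{\mathcal S}_t(G)$. Algorithm (inputs $d,k,\delta\in(0,1),\epsilon,\epsilon_1>0$). Initialize $\mathcal A_1=\emptyset,\mathcal V=\emptyset,N_0=0,t=1,j=1,T=\lceil\log_2(2d\epsilon_1/\epsilon)\rceil$. While $\epsilon_t>\epsilon/(d-|\mathcal V|)$ (a ''round'' $t$): $N_t=N(\epsilon_t/2,\delta/(T|\mathcal F_{\mathrm{act}}(\mathcal V)|))$; observe each $(k+1)$-subset of $[d]$ not contained in $\mathcal V$ in $N_t-N_{t-1}$ new samples; repeat the following ''iteration'' until $\mathcal A_j=\mathcal A_{j-1}$: $\theta_j=(d-|\mathcal V|)\epsilon_t$; $\hat G_j\in\arg\max_{G\in\mathcal G_j}\hat{\mathcal S}_t(G)$, $\hat E_j$ its EC; $L_j=\{E\in\mathcal E_{d,k}:E^{(j)}\neq\emptyset,\hat{\mathcal S}_t(\hat E_j^{(j)})-\hat{\mathcal S}_t(E^{(j)})\le\theta_j\}$; if some $f\in U(\hat E_j^{(j)})\cap\mathcal F_{\mathrm{act}}(\mathcal V)$ satisfies $f\in U(E^{(j)})$ for all $E\in L_j$, accept one such $f=\langle X_v,\Pi\rangle$: $\mathcal V\leftarrow\mathcal V\cup\{v\}$, $\mathcal A_{j+1}=\mathcal A_j\cup\{f\}$;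 else $\mathcal A_{j+1}=\mathcal A_j$; $j\leftarrow j+1$. After the iterations, if $|\mathcal V|=d$ return $\mathcal A_j$; else $t\leftarrow t+1$, $\epsilon_t=\epsilon_{t-1}/2$. After the while loop: $\epsilon_{\mathrm{last}}=\epsilon/(d-|\mathcal V|)$, $N_T=N(\epsilon_{\mathrm{last}}/2,\delta/(T|\mathcal F_{\mathrm{act}}(\mathcal V)|))$, observe remaining subsets in $N_T-N_{T-1}$ more samples, return a maximizer of $\hat{\mathcal S}_T$ over $\mathcal G_j$. Event: with $\mathcal V_t$ the value of $\mathcal V$ at the start of round $t$, $\mathcal E:=\{\forall t\in[T],\forall f\in\mathcal F_{\mathrm{act}}(\mathcal V_t): |\hat H_t(f)-H(f)|\le\epsilon_t/2\}$. *)

(* Defs.v *)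
From HB Require Import structures.
From mathcomp Require Import all_boot all_order all_algebra.
From mathcomp Require Import boolp classical_sets reals ereal exp.
Set Implicit Arguments. Unset Strict Implicit. Unset Printing Implicit Defensive.
Import Order.TTheory GRing.Theory Num.Theory.
Local Open Scope ring_scope.

(* A family <X_i, Pi> is the pair (i, Pi). *)
Definition fam (d : nat) := ('I_d * {set 'I_d})%type.
Definition valid_fam (d k : nat) (f : fam d) : bool :=
  (f.1 \notin f.2) && (#|f.2| <= k)%N.
(* A graph is identified with its set of families. *)
Definition graph (d : nat) := {set fam d}.
Definition parent_rel (d : nat) (G : graph d) : rel 'I_d :=
  fun j i => [exists f in G, (f.1 == i) && (j \in f.2)].
Definition is_dag (d k : nat) (G : graph d) : bool :=
  [&& [forall f in G, valid_fam k f],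
      [forall i : 'I_d, #|[set f in G | f.1 == i]| == 1%N] &
      [forall i : 'I_d, forall j : 'I_d,
          parent_rel G j i ==> ~~ connect (parent_rel G) i j]].

Definition adj (d : nat) (G : graph d) : rel 'I_d :=
  fun u v => parent_rel G u v || parent_rel G v u.
Definition collider (d : nat) (G : graph d) (u v w : 'I_d) : bool :=
  parent_rel G u v && parent_rel G w v.
Definition active_trail (d : nat) (G : graph d) (C : {set 'I_d})
    (a : 'I_d) (s : seq 'I_d) : bool :=
  let p := a :: s in
  [&& path (adj G) a s, uniq p &
      all (fun n => let u := nth a p n.-1 in let v := nth a p n in
                    let w := nth a p n.+1 in
                    if collider G u v w
                    then [exists x in C, connect (parent_rel G) v x]
                    else v \notin C)
          (iota 1 (size s).-1)].
Definition d_connected (d : nat) (G : graph d) (C : {set 'I_d}) (a b : 'I_d)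
  : Prop := exists s, active_trail G C a s /\ last a s = b.
Definition d_separated (d : nat) (G : graph d) (C : {set 'I_d}) (a b : 'I_d)
  : Prop := ~ d_connected G C a b.
(* identical conditional independence constraints X_a _||_ X_b | X_C *)
Definition markov_equiv (d : nat) (G1 G2 : graph d) : Prop :=
  forall (a b : 'I_d) (C : {set 'I_d}), a != b -> a \notin C -> b \notin C ->
    (d_separated G1 C a b <-> d_separated G2 C a b).

(* X : 'I_d -> Omega -> T on a finite probability space (Omega, P). *)
Definition is_pmf (R : realType) (Omega : finType) (P : Omega -> R) : Prop :=
  (forall w, 0 <= P w) /\ \sum_(w : Omega) P w = 1.
Definition key (d : nat) (Omega T : finType) (X : 'I_d -> Omega -> T)
    (S : {set 'I_d}) (w : Omega) : {ffun 'I_d -> option T} :=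
  [ffun i => if i \in S then Some (X i w) else None].
Definition marg (R : realType) (d : nat) (Omega T : finType) (P : Omega -> R)
    (X : 'I_d -> Omega -> T) (S : {set 'I_d}) (kv : {ffun 'I_d -> option T}) : R :=
  \sum_(w | key X S w == kv) P w.
Definition joint_entropy (R : realType) (d : nat) (Omega T : finType)
    (P : Omega -> R) (X : 'I_d -> Omega -> T) (S : {set 'I_d}) : R :=
  - \sum_(kv : {ffun 'I_d -> option T}) marg P X S kv * ln (marg P X S kv).
Definition cond_entropy (R : realType) (d : nat) (Omega T : finType)
    (P : Omega -> R) (X : 'I_d -> Omega -> T) (f : fam d) : R :=
  joint_entropy P X (f.1 |: f.2) - joint_entropy P X f.2.

Definition score (R : realType) (d : nat) (h : fam d -> R) (F : graph d) : R :=
  - \sum_(f in F) h f.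
(* max of s over the (finite) set of graphs satisfying Q; -oo if empty *)
Definition emax (R : realType) (d : nat) (Q : graph d -> Prop)
    (s : graph d -> R) : \bar R :=
  \big[Order.max/-oo%E]_(G : graph d | `[< Q G >]) ((s G)%:E).

Definition chld (d : nat) (A : graph d) : {set 'I_d} := [set f.1 | f in A].
Definition active_fam (d k : nat) (V : {set 'I_d}) (f : fam d) : bool :=
  valid_fam k f && (f.1 \notin V).
Definition Gj (d k : nat) (A : graph d) (G : graph d) : bool :=
  is_dag k G && (A \subset G).
Definition ec_j (d k : nat) (A : graph d) (G0 : graph d) : graph d -> Prop :=
  fun G => Gj k A G /\ markov_equiv G0 G.
Definition inU (d : nat) (Q : graph d -> Prop) (f : fam d) : Prop :=
  exists G, Q G /\ f \in G.
Definition epst (R : realType) (eps1 : R) (t : nat) : R := eps1 / 2 ^+ t.-1.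
Definition while_ok (R : realType) (d : nat) (eps eps1 : R) (t : nat)
    (V : {set 'I_d}) : Prop :=
  (#|V| < d)%N /\ eps / (d - #|V|)%:R < epst eps1 t.
(* f may be accepted in an iteration with current A = A_j, estimates h,
   threshold theta, and chosen maximizer Ghat (whose class is Ehat_j) *)
Definition acceptable (R : realType) (d k : nat) (h : fam d -> R) (theta : R)
    (A : graph d) (Ghat : graph d) (f : fam d) : Prop :=
  [/\ inU (ec_j k A Ghat) f, active_fam k (chld A) f &
      forall G0, is_dag k G0 -> (exists G, ec_j k A G0 G) ->
        (emax (ec_j k A Ghat) (score h) - emax (ec_j k A G0) (score h)
           <= theta%:E)%E ->
        inU (ec_j k A G0) f].

(* A prefix of a run up to (the start of) iteration J:
   A j = A_j, rd j = round of iteration j, Ghat j = chosen maximizer. *)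
Definition run_prefix (R : realType) (d k : nat) (eps eps1 : R)
    (Hhat : nat -> fam d -> R) (J : nat) (A : nat -> graph d)
    (rd : nat -> nat) (Ghat : nat -> graph d) : Prop :=
  [/\ A 1%N = finset.set0, rd 1%N = 1%N, while_ok eps eps1 1 (chld (A 1%N)) &
      forall j, (1 <= j < J)%N ->
        let t := rd j in
        let V := chld (A j) in
        let theta := (d - #|V|)%:R * epst eps1 t in
        [/\ Gj k (A j) (Ghat j),
            (forall G, Gj k (A j) G -> score (Hhat t) G <= score (Hhat t) (Ghat j)) &
            (exists f, acceptable k (Hhat t) theta (A j) (Ghat j) f
                       /\ A j.+1 = f |: A j /\ rd j.+1 = t)
            \/ ((forall f, ~ acceptable k (Hhat t) theta (A j) (Ghat j) f)
                /\ A j.+1 = A j /\ rd j.+1 = t.+1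
                /\ while_ok eps eps1 t.+1 V)]].

(* The event E, restricted to the rounds started up to iteration J:
   a round starts at iteration j iff j = 1 or rd (j-1) < rd j, and then
   V_t = chld (A j). *)
Definition event_E (R : realType) (d k : nat) (eps1 : R) (H : fam d -> R)
    (Hhat : nat -> fam d -> R) (J : nat) (A : nat -> graph d)
    (rd : nat -> nat) : Prop :=
  forall j, (1 <= j <= J)%N -> (j == 1%N) || (rd j.-1 < rd j)%N ->
    forall f, active_fam k (chld (A j)) f ->
      `|Hhat (rd j) f - H f| <= epst eps1 (rd j) / 2.

(* Main.v *)
Require Import Defs.
From HB Require Import structures.
From mathcomp Require Import all_boot all_order all_algebra.
From mathcomp Require Import boolp classical_sets reals ereal exp.
From mathcomp Require Import zify lra.
Import Order.TTheory GRing.Theory Num.Theory.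
Set Implicit Arguments. Unset Strict Implicit. Unset Printing Implicit Defensive.

Section Dag.
Variables (d k : nat) (G : graph d).
Hypothesis dG : is_dag k G.

Definition paG (i : 'I_d) : {set 'I_d} := [set j | parent_rel G j i].
Definition rk (i : 'I_d) : nat := #|[set j | connect (parent_rel G) j i]|.

Lemma dag_valid f : f \in G -> valid_fam k f.
Proof. by case/and3P: dG => /forall_inP H _ _; apply: H. Qed.

Lemma dag_uniq f g : f \in G -> g \in G -> f.1 = g.1 -> f = g.
Proof.
case/and3P: dG => _ /forallP H _ fG gG e.
have /cards1P [x Hx] := H f.1.
have : f \in [set f0 in G | f0.1 == f.1] by rewrite inE fG eqxx.
have : g \in [set f0 in G | f0.1 == f.1] by rewrite inE gG e eqxx.
by rewrite Hx !inE => /eqP -> /eqP ->.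
Qed.

Lemma dag_ex i : exists2 f, f \in G & f.1 = i.
Proof.
case/and3P: dG => _ /forallP H _.
have /cards1P [x Hx] := H i.
have : x \in [set f0 in G | f0.1 == i] by rewrite Hx inE.
by rewrite inE => /andP [xG /eqP xi]; exists x.
Qed.

Lemma dag_famE f : f \in G -> f = (f.1, paG f.1).
Proof.
move=> fG; case: f fG => i S fG /=; congr pair; apply/setP => j.
rewrite inE; apply/idP/existsP => [jS | [g /and3P [gG /eqP g1 jg]]].
  by exists (i, S); rewrite fG eqxx jS.
by move: jg; rewrite (dag_uniq gG fG g1).
Qed.

Lemma dag_in i : (i, paG i) \in G.
Proof. by have [f fG fi] := dag_ex i; rewrite -fi -(dag_famE fG). Qed.

Lemma parE j i : parent_rel G j i = (j \in paG i).
Proof. by rewrite inE. Qed.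

Lemma dag_irr i : ~~ parent_rel G i i.
Proof.
rewrite parE; have := dag_valid (dag_in i).
by rewrite /valid_fam /= => /andP [].
Qed.

Lemma dag_acyc j i : parent_rel G j i -> ~~ connect (parent_rel G) i j.
Proof. by case/and3P: dG => _ _ /forallP H; move: (H i) => /forallP /(_ j) /implyP. Qed.

Lemma rk_le a b : connect (parent_rel G) a b -> (rk a <= rk b)%N.
Proof.
move=> ab; apply: subset_leq_card; apply/fintype.subsetP => x; rewrite !inE => xa.
exact: connect_trans xa ab.
Qed.

Lemma rk_lt j i : parent_rel G j i -> (rk j < rk i)%N.
Proof.
move=> ji; apply: proper_card; apply/properP; split.
  apply/fintype.subsetP => x; rewrite !inE => xj.
  exact: connect_trans xj (connect1 ji).
by exists i; rewrite !inE ?connect0 // (negbTE (dag_acyc ji)).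
Qed.

Lemma conn_lt a b : connect (parent_rel G) a b -> a != b ->
  exists2 x, connect (parent_rel G) a x & parent_rel G x b.
Proof.
move=> /connectP [p pth ->]; elim/last_ind: p pth => [|p x _] /=; first by rewrite eqxx.
rewrite last_rcons rcons_path => /andP [pth lx] _.
by exists (last a p) => //; apply/connectP; exists p.
Qed.

Lemma conn_antisym a b : connect (parent_rel G) a b -> connect (parent_rel G) b a -> a = b.
Proof.
move=> ab ba; apply/eqP; apply/negPn/negP => nab.
have [x ax xb] := conn_lt ab nab.
by move: (dag_acyc xb); rewrite (connect_trans ba ax).
Qed.

Lemma adjC a b : adj G a b = adj G b a.
Proof. by rewrite /adj orbC. Qed.

End Dag.

Definition ok3 d (G : graph d) (C : {set 'I_d}) (u v w : 'I_d) : bool :=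
  if collider G u v w then [exists x in C, connect (parent_rel G) v x]
  else v \notin C.

Lemma ok3C d (G : graph d) C u v w : ok3 G C u v w = ok3 G C w v u.
Proof. by rewrite /ok3 /collider andbC. Qed.

Section Sep.
Variables (d k : nat) (G : graph d).
Hypothesis dG : is_dag k G.

Lemma block v u m (q : nat -> 'I_d) :
  (0 < m)%N -> q 0%N = v -> q m = u -> ~~ adj G u v ->
  ~~ connect (parent_rel G) v u ->
  (forall i, (i < m)%N -> adj G (q i) (q i.+1)) ->
  (forall i, (0 < i < m)%N -> ok3 G (paG G v) (q i.-1) (q i) (q i.+1)) -> False.
Proof.
move=> m0 q0 qm nuv nvu Hadj Hok.
have key : forall i, (i < m)%N -> parent_rel G (q i) (q i.+1) && connect (parent_rel G) v (q i.+1).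
  elim=> [|i IH] Hi.
    move: (Hadj 0%N Hi); rewrite /adj q0 => /orP [H|H]; first by rewrite H (connect1 H).
    case: (ltnP 1 m) => m1.
      move: (Hok 1%N m1) => /=; rewrite /ok3 /collider q0.
      have -> : parent_rel G v (q 1%N) = false.
        by apply/negbTE/negP => H2; move: (dag_acyc dG H); rewrite (connect1 H2).
      by rewrite /= -parE H.
    have em : m = 1%N by apply/eqP; rewrite eqn_leq m1.
    by move: nuv; rewrite -qm em /adj H.
  have /andP [H1 H2] := IH (ltnW Hi).
  move: (Hadj i.+1 Hi); rewrite /adj => /orP [H|H].
    by rewrite H (connect_trans H2 (connect1 H)).
  move: (Hok i.+1 (andb_true_intro (conj (ltn0Sn i) Hi))) => /=.
  rewrite /ok3 /collider H1 H /= => /exists_inP [x xC vx].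
  rewrite -parE in xC.
  by move: (dag_acyc dG xC); rewrite (connect_trans H2 vx).
have Hm : (m.-1 < m)%N by rewrite ltn_predL.
have /andP [_ H] := key m.-1 Hm.
by move: nvu; rewrite -qm -(ltn_predK m0) H.
Qed.

Lemma trail_facts C a s : active_trail G C a s ->
  (forall i, (i < size s)%N -> adj G (nth a (a :: s) i) (nth a (a :: s) i.+1)) /\
  (forall n, (0 < n < size s)%N ->
     ok3 G C (nth a (a :: s) n.-1) (nth a (a :: s) n) (nth a (a :: s) n.+1)).
Proof.
case/and3P => /(pathP a) Hp _ /allP Ha; split; first by move=> i /Hp.
move=> n Hn; have := Ha n; rewrite mem_iota.
have -> : (1 <= n < 1 + (size s).-1)%N by lia.
by move=> /(_ isT).
Qed.

Lemma sep_uv u v : u != v -> ~~ adj G u v -> ~~ connect (parent_rel G) v u ->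
  d_separated G (paG G v) u v /\ d_separated G (paG G v) v u.
Proof.
move=> uv nadj nc; split.
  move=> [s [Ht Hl]]; have [Fa Fo] := trail_facts Ht.
  have m0 : (0 < size s)%N by case: s Ht Hl {Fa Fo} => [|? ?] //= _ e; rewrite e eqxx in uv.
  apply: (@block v u (size s) (fun i => nth u (u :: s) (size s - i))) => //.
  - by rewrite subn0 -last_nth.
  - by rewrite subnn.
  - move=> i Hi; rewrite adjC.
    have := Fa (size s - i.+1)%N; have -> : (size s - i.+1).+1 = size s - i by lia.
    by apply; lia.
  - move=> i Hi; rewrite ok3C.
    have := Fo (size s - i)%N.
    have -> : (size s - i).-1 = size s - i.+1 by lia.
    have -> : (size s - i).+1 = size s - i.-1 by lia.
    by apply; lia.
move=> [s [Ht Hl]]; have [Fa Fo] := trail_facts Ht.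
have m0 : (0 < size s)%N by case: s Ht Hl {Fa Fo} => [|? ?] //= _ e; rewrite e eqxx in uv.
apply: (@block v u (size s) (fun i => nth v (v :: s) i)) => //.
by rewrite -last_nth.
Qed.

Lemma sep_exists a b : a != b -> ~~ adj G a b ->
  exists C : {set 'I_d}, [/\ a \notin C, b \notin C & d_separated G C a b].
Proof.
move=> ab nadj.
case: (boolP (connect (parent_rel G) b a)) => cba.
  have ncab : ~~ connect (parent_rel G) a b.
    by apply/negP => cab; move: ab; rewrite (conn_antisym dG cab cba) eqxx.
  have [_ H] := @sep_uv b a (ltac:(by rewrite eq_sym)) (ltac:(by rewrite adjC)) ncab.
  exists (paG G a); split => //; rewrite -parE ?(dag_irr dG) //.
  by apply: contra nadj => Hx; rewrite /adj Hx orbT.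
have [H _] := @sep_uv a b ab nadj cba.
exists (paG G b); split => //; rewrite -parE ?(dag_irr dG) //.
by apply: contra nadj => Hx; rewrite /adj Hx.
Qed.

Lemma trail1 C a b : a != b -> adj G a b -> d_connected G C a b.
Proof. by move=> ab Hab; exists [:: b]; rewrite /active_trail /= Hab inE ab. Qed.

End Sep.

Lemma me_sym d (G1 G2 : graph d) : markov_equiv G1 G2 -> markov_equiv G2 G1.
Proof. by move=> H a b C ab aC bC; split => /(H a b C ab aC bC). Qed.

Section Equiv.
Variables (d k : nat) (G1 G2 : graph d).
Hypotheses (d1 : is_dag k G1) (d2 : is_dag k G2) (me : markov_equiv G1 G2).

Lemma skel_le d' k' (H1 H2 : graph d') : is_dag k' H1 -> is_dag k' H2 ->
  markov_equiv H1 H2 -> forall a b, adj H1 a b -> adj H2 a b.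
Proof.
move=> e1 e2 m a b Hab.
have ab : a != b.
  by apply/negP => /eqP e; move: Hab; rewrite e /adj orbb (negbTE (dag_irr e1 b)).
apply/negPn/negP => nadj.
have [C [aC bC Hs]] := sep_exists e2 ab nadj.
have /(m a b C ab aC bC) := Hs.
by apply; apply: trail1.
Qed.

Lemma skel a b : adj G1 a b = adj G2 a b.
Proof.
apply/idP/idP; first exact: (skel_le d1 d2 me).
exact: (skel_le d2 d1 (me_sym me)).
Qed.

Lemma vs_le d' k' (H1 H2 : graph d') : is_dag k' H1 -> is_dag k' H2 ->
  markov_equiv H1 H2 -> forall a w b, a != b -> ~~ adj H1 a b ->
  collider H1 a w b -> collider H2 a w b.
Proof.
move=> e1 e2 m a w b ab nadj /andP [aw bw].
have sk a' b' : adj H1 a' b' = adj H2 a' b'.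
  apply/idP/idP; first exact: (skel_le e1 e2 m).
  exact: (skel_le e2 e1 (me_sym m)).
have [C [wC aC bC HC]] : exists C : {set 'I_d'},
    [/\ w \notin C, a \notin C, b \notin C & d_separated H1 C a b].
  case: (boolP (connect (parent_rel H1) b a)) => cba.
    have ncab : ~~ connect (parent_rel H1) a b.
      by apply/negP => cab; move: ab; rewrite (conn_antisym e1 cab cba) eqxx.
    have [_ H] := @sep_uv _ _ _ e1 b a (ltac:(by rewrite eq_sym)) (ltac:(by rewrite adjC)) ncab.
    exists (paG H1 a); split => //; rewrite -parE ?(dag_irr e1) //.
      apply/negP => wa.
      by move: (dag_acyc e1 aw); rewrite (connect1 wa).
    by apply: contra nadj => Hx; rewrite /adj Hx orbT.
  have [H _] := @sep_uv _ _ _ e1 a b ab nadj cba.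
  exists (paG H1 b); split => //; rewrite -parE ?(dag_irr e1) //.
    apply/negP => wb.
    by move: (dag_acyc e1 bw); rewrite (connect1 wb).
  by apply: contra nadj => Hx; rewrite /adj Hx.
have HC2 := (iffLR (m a b C ab aC bC)) HC.
apply/negPn/negP => ncol; apply: HC2.
have aw2 : adj H2 a w by rewrite -sk /adj aw.
have wb2 : adj H2 w b by rewrite -sk /adj bw orbT.
have naw : a != w by apply/eqP => e; move: (dag_irr e1 w); rewrite -{1}e aw.
have nwb : w != b by apply/eqP => e; move: (dag_irr e1 w); rewrite {1}e bw.
exists [:: w; b]; split => //.
rewrite /active_trail /= aw2 wb2 !inE negb_or ab naw nwb /=.
by rewrite (negbTE ncol) wC.
Qed.

End Equiv.

Lemma nlt2 (m n : nat) : (m < n)%N -> (n < m)%N -> False.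
Proof. lia. Qed.
Lemma nle_lt (m n : nat) : (m <= n)%N -> (n < m)%N -> False.
Proof. lia. Qed.
Lemma nlt3 (a b c : nat) : (a < b)%N -> (b < c)%N -> (c < a)%N -> False.
Proof. lia. Qed.

Section Chick.
Variable d : nat.
Implicit Types (pa : 'I_d -> {set 'I_d}).

Definition padj pa (a b : 'I_d) := (a \in pa b) || (b \in pa a).
Definition pvs pa (a w b : 'I_d) :=
  [&& a != b, a \in pa w, b \in pa w & ~~ padj pa a b].
Definition ranked pa := exists r : 'I_d -> nat, forall i j, j \in pa i -> (r j < r i)%N.
Definition pequiv pa1 pa2 :=
  (forall a b, padj pa1 a b = padj pa2 a b) /\
  (forall a w b, pvs pa1 a w b = pvs pa2 a w b).
Definition cnt pa1 pa2 :=
  #|[set ab : 'I_d * 'I_d | (ab.1 \in pa1 ab.2) && (ab.2 \in pa2 ab.1)]|.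

Lemma find_edge pa1 pa2 r1 r2 :
  (forall i j, j \in pa1 i -> (r1 j < r1 i)%N) ->
  (forall i j, j \in pa2 i -> (r2 j < r2 i)%N) ->
  pequiv pa1 pa2 -> forall a b, a \in pa1 b -> b \in pa2 a ->
  exists y c, [/\ y \in pa1 c, c \in pa2 y & pa1 c = y |: pa1 y].
Proof.
move=> R1 R2 [Ea Ev] a b ab ba.
have no2 i j : j \in pa2 i -> i \in pa2 j -> False.
  by move=> /R2 h1 /R2 h2; apply: nlt2 h1 h2.
have no1 i j : j \in pa1 i -> i \in pa1 j -> False.
  by move=> /R1 h1 /R1 h2; apply: nlt2 h1 h2.
pose P i := pa1 i != pa2 i.
have Pb : P b.
  apply/negP => /eqP e; apply: (no2 a b ba); by rewrite -e.
case: (@arg_maxnP _ b P r2 Pb) => y Py ymax.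
have ch_eq z : y \in pa2 z -> pa1 z = pa2 z.
  move=> yz; apply/eqP; apply/negPn/negP => Pz.
  exact: nle_lt (ymax z Pz) (R2 _ _ yz).
pose Cy i := (y \in pa1 i) && (i \in pa2 y).
have [e Ce] : exists e, Cy e.
  have : ~~ ((pa1 y \subset pa2 y) && (pa2 y \subset pa1 y)) by rewrite -finset.eqEsubset.
  rewrite negb_and => /orP [/subsetPn [e e1 e2] | /subsetPn [e e2 e1]].
    have := Ea e y; rewrite /padj e1 (negbTE e2) /= => /esym yz.
    by case: (no1 _ _ e1); rewrite ch_eq.
  have := Ea e y; rewrite /padj e2 (negbTE e1) /= => ye.
  by exists e; rewrite /Cy ye e2.
case: (@arg_minnP _ e Cy r1 Ce) => c /andP [yc cy] cmin.
exists y, c; split => //.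
apply/setP => x; rewrite !inE.
have yy : y \notin pa1 y by apply/negP => /R1; rewrite ltnn.
apply/idP/idP.
  move=> xc; case: (x =P y) => [//|/eqP nxy] /=.
  have hadj : padj pa1 x y.
    apply/negPn/negP => nadj.
    have : pvs pa1 x c y by rewrite /pvs nxy xc yc nadj.
    rewrite Ev => /and4P [_ _ yc2 _]; exact: (no2 _ _ cy yc2).
  move: hadj; rewrite /padj => /orP [//| yx].
  have := Ea y x; rewrite /padj yx /= => /esym /orP [yx2 | xy2].
    have ex := ch_eq x yx2.
    have := Ea x c; rewrite /padj xc /= => /esym /orP [xc2 | cx2].
      case: (nlt3 (R2 _ _ cy) (R2 _ _ yx2) (R2 _ _ xc2)).
    by case: (no1 _ _ xc); rewrite ex.
  have := cmin x; rewrite /Cy yx xy2 => /(_ isT) h; case: (nle_lt h (R1 _ _ xc)).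
case/orP => [/eqP -> //| xy].
have x2 : x \in pa2 y.
  have := Ea x y; rewrite /padj xy /= => /esym /orP [//| yx2].
  by case: (no1 _ _ xy); rewrite ch_eq.
have nxc : x != c by apply/eqP => exc; apply: (no1 _ _ yc); rewrite -exc.
have hadj : padj pa1 x c.
  apply/negPn/negP => nadj.
  have : pvs pa2 x y c by rewrite /pvs nxc x2 cy -Ea nadj.
  rewrite -Ev => /and4P [_ _ cy1 _]; exact: (no1 _ _ yc cy1).
move: hadj; rewrite /padj => /orP [//| cx].
case: (nlt3 (R1 _ _ cx) (R1 _ _ xy) (R1 _ _ yc)).
Qed.

End Chick.

Section Rev.
Variables (d : nat) (pa : 'I_d -> {set 'I_d}) (r : 'I_d -> nat) (y c : 'I_d).
Hypotheses (R : forall i j, j \in pa i -> (r j < r i)%N) (yc : y \in pa c)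
  (cov : pa c = y |: pa y).

Definition rev_pa : 'I_d -> {set 'I_d} :=
  fun i => if i == y then c |: pa y else if i == c then pa y else pa i.

Lemma nyc : y != c. Proof. by apply/eqP => e; move: (R yc); rewrite e ltnn. Qed.
Lemma yy : y \notin pa y. Proof. by apply/negP => /R; rewrite ltnn. Qed.
Lemma cy : c \notin pa y.
Proof. by apply/negP => /R h; move: (R yc) => h2; case: (nlt2 h h2). Qed.

Lemma memY x : (x \in rev_pa y) = (x == c) || (x \in pa y).
Proof. by rewrite /rev_pa eqxx in_setU1. Qed.
Lemma memC x : (x \in rev_pa c) = (x \in pa y).
Proof. by rewrite /rev_pa eq_sym (negbTE nyc) eqxx. Qed.
Lemma memO i x : i != y -> i != c -> (x \in rev_pa i) = (x \in pa i).
Proof. by move=> iy ic; rewrite /rev_pa (negbTE iy) (negbTE ic). Qed.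
Lemma memPc x : (x \in pa c) = (x == y) || (x \in pa y).
Proof. by rewrite cov in_setU1. Qed.

Lemma mem_same x i : ~~ ((x == y) && (i == c)) -> ~~ ((x == c) && (i == y)) ->
  (x \in rev_pa i) = (x \in pa i).
Proof.
have [->|iy] := eqVneq i y.
  by rewrite andbT => _ /negbTE xc; rewrite memY xc.
have [->|ic] := eqVneq i c.
  by rewrite andbT => /negbTE xy _; rewrite memC memPc xy.
move=> _ _; exact: memO.
Qed.

Lemma padj_rev a b : padj rev_pa a b = padj pa a b.
Proof.
case: (boolP ((a == y) && (b == c))) => [/andP [/eqP -> /eqP ->] | h1].
  by rewrite /padj memY eqxx yc !orbT.
case: (boolP ((a == c) && (b == y))) => [/andP [/eqP -> /eqP ->] | h2].
  by rewrite /padj memY eqxx yc !orbT.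
rewrite /padj !mem_same //; first by rewrite andbC.
by rewrite andbC.
Qed.

Lemma pvs_rev a w b : pvs rev_pa a w b = pvs pa a w b.
Proof.
rewrite /pvs padj_rev; apply/and4P/and4P => [[ab aw bw np] | [ab aw bw np]].
  have [ew|wy] := eqVneq w y.
    move: aw bw; rewrite ew !memY.
    case: (a =P c) => [ea|_] /=.
      move=> _ /orP [/eqP eb|bpy]; first by move: ab; rewrite ea eb eqxx.
      by move: np; rewrite /padj ea memPc bpy !orbT.
    case: (b =P c) => [eb|_] /=.
      move=> apy _; by move: np; rewrite /padj eb memPc apy !orbT.
    by move=> ? ?; split.
  have [ew|wc] := eqVneq w c.
    by move: aw bw; rewrite ew !memC !memPc => -> ->; rewrite !orbT; split.
  by move: aw bw; rewrite !memO // => ? ?; split.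
have [ew|wy] := eqVneq w y.
  by move: aw bw; rewrite ew !memY => -> ->; rewrite !orbT; split.
have [ew|wc] := eqVneq w c.
  move: aw bw; rewrite ew !memPc !memC.
  case: (a =P y) => [ea|_] /=.
    move=> _ /orP [/eqP eb|bpy]; first by move: ab; rewrite ea eb eqxx.
    by move: np; rewrite /padj ea bpy !orbT.
  case: (b =P y) => [eb|_] /=.
    by move=> apy _; move: np; rewrite /padj eb apy.
  by move=> ? ?; split.
by move: aw bw; rewrite !memO // => ? ?; split.
Qed.

Lemma ranked_rev : ranked rev_pa.
Proof.
exists (fun i => if i == c then (r y).*2 else if i == y then (r y).*2.+1 else (r i).*2).
have ryc := R yc.
move=> i j; have [->|iy] := eqVneq i y.
  rewrite memY (negbTE nyc) /= => /orP [/eqP ->|jy]; first by rewrite eqxx.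
  have jc : j != c by apply: contraTneq jy => ->; exact: cy.
  have jy' : j != y by apply: contraTneq jy => ->; exact: yy.
  rewrite (negbTE jc) (negbTE jy'); have := R jy; lia.
have [->|ic] := eqVneq i c.
  rewrite memC => jy.
  have jc : j != c by apply: contraTneq jy => ->; exact: cy.
  have jy' : j != y by apply: contraTneq jy => ->; exact: yy.
  rewrite (negbTE jc) (negbTE jy'); have := R jy; lia.
rewrite memO // => ji.
have := R ji; have [->|jc] := eqVneq j c; first by lia.
have [->|jy] := eqVneq j y; first by lia.
lia.
Qed.

Local Open Scope ring_scope.
Lemma sum3 (V : zmodType) (f : 'I_d -> V) :
  \sum_i f i = f y + f c + \sum_(i | (i != y) && (i != c)) f i.
Proof.
rewrite (bigD1 y) //= (bigD1 c) /=; last by rewrite eq_sym nyc.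
by rewrite addrA; congr (_ + _); apply: eq_bigl => i; rewrite andbC.
Qed.

Lemma score_rev (V : zmodType) (J : {set 'I_d} -> V) :
  \sum_i (J (i |: rev_pa i) - J (rev_pa i)) = \sum_i (J (i |: pa i) - J (pa i)).
Proof.
rewrite sum3 [in RHS]sum3.
rewrite (eq_bigr (fun i => J (i |: pa i) - J (pa i))); last first.
  by move=> i /andP [iy ic]; rewrite /rev_pa (negbTE ic) (negbTE iy).
congr (_ + _).
rewrite /rev_pa eqxx eq_sym (negbTE nyc) eqxx cov finset.setUCA.
by rewrite addrA subrK [RHS]addrC addrA subrK.
Qed.

End Rev.

Section ChickThm.
Variable d : nat.
Implicit Types (pa : 'I_d -> {set 'I_d}).
Local Open Scope ring_scope.

Lemma cnt_rev pa pa2 r r2 y c :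
  (forall i j, j \in pa i -> (r j < r i)%N) -> y \in pa c -> pa c = y |: pa y ->
  (forall i j, j \in pa2 i -> (r2 j < r2 i)%N) -> c \in pa2 y ->
  (cnt (rev_pa pa y c) pa2 < cnt pa pa2)%N.
Proof.
move=> R yc cov R2 cy2.
apply: proper_card; apply/properP; split.
  apply/fintype.subsetP => [[a b]]; rewrite !inE /= => /andP [ab ba].
  rewrite ba andbT.
  case: (boolP ((a == c) && (b == y))) => [/andP [/eqP ea /eqP eb] | h2].
    by move: ba; rewrite ea eb => /R2 h; case: (nlt2 h (R2 _ _ cy2)).
  case: (boolP ((a == y) && (b == c))) => [/andP [/eqP ea /eqP eb] | h1].
    by move: ab; rewrite ea eb (memC R yc) (negbTE (yy y R)).
  by rewrite -(mem_same R yc cov).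
exists (y, c); rewrite !inE /= ?yc ?cy2 //.
by rewrite (memC R yc) (negbTE (yy y R)).
Qed.

Lemma chick0 (V : zmodType) pa1 pa2 (J : {set 'I_d} -> V) :
  pequiv pa1 pa2 -> cnt pa1 pa2 = 0%N ->
  \sum_i (J (i |: pa1 i) - J (pa1 i)) = \sum_i (J (i |: pa2 i) - J (pa2 i)).
Proof.
move=> [Ea _] /cards0_eq E0.
have norev a b : a \in pa1 b -> b \in pa2 a -> False.
  move=> ab ba; have : (a, b) \in finset.set0 by rewrite -E0 inE /= ab ba.
  by rewrite inE.
apply: eq_bigr => i _; have -> // : pa1 i = pa2 i.
apply/setP => x; apply/idP/idP => xi.
  have := Ea x i; rewrite /padj xi /= => /esym /orP [//| ix].
  by case: (norev _ _ xi ix).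
have := Ea x i; rewrite /padj xi /= => /orP [//| ix].
by case: (norev _ _ ix xi).
Qed.

Theorem chick (V : zmodType) pa1 pa2 (J : {set 'I_d} -> V) :
  ranked pa1 -> ranked pa2 -> pequiv pa1 pa2 ->
  \sum_i (J (i |: pa1 i) - J (pa1 i)) = \sum_i (J (i |: pa2 i) - J (pa2 i)).
Proof.
move=> R1 [r2 R2] E.
move: {2}(cnt pa1 pa2) (leqnn (cnt pa1 pa2)) => n.
elim: n pa1 R1 E => [|n IH] pa1 [r1 R1] E Hn.
  by apply: chick0 => //; apply/eqP; rewrite -leqn0.
case: (posnP (cnt pa1 pa2)) => [c0|cpos]; first exact: chick0.
have [[a b]] : exists ab, ab \in [set ab : 'I_d * 'I_d | (ab.1 \in pa1 ab.2) && (ab.2 \in pa2 ab.1)].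
  by apply/set0Pn; rewrite -card_gt0.
rewrite inE /= => /andP [ab ba].
have [y [c [yc cy cov]]] := find_edge R1 R2 E ab ba.
rewrite -(score_rev R1 yc cov); apply: IH.
- exact: ranked_rev R1 yc.
- case: E => Ea Ev; split => *; first by rewrite (padj_rev R1 yc cov).
  by rewrite (pvs_rev R1 yc cov).
- have := cnt_rev R1 yc cov R2 cy; lia.
Qed.

End ChickThm.

Section Link.
Local Open Scope ring_scope.

Lemma dag_imset d k (G : graph d) : is_dag k G -> G = [set (i, paG G i) | i : 'I_d].
Proof.
move=> dG; apply/setP => f; apply/idP/imsetP => [fG | [i _ ->]].
  by exists f.1 => //; rewrite {1}(dag_famE dG fG).
exact: (dag_in dG i).
Qed.

Lemma score_pa (R : realType) d k (G : graph d) (h : fam d -> R) : is_dag k G ->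
  score h G = - \sum_i h (i, paG G i).
Proof.
move=> dG; rewrite /score {1}(dag_imset dG); congr (- _).
rewrite big_imset /=; last by move=> i j _ _ [].
by apply: eq_bigl => i.
Qed.

Lemma padj_adj d k (G : graph d) : is_dag k G -> forall a b, padj (paG G) a b = adj G a b.
Proof. by move=> dG a b; rewrite /padj /adj !inE. Qed.

Lemma ranked_dag d k (G : graph d) : is_dag k G -> ranked (paG G).
Proof. by move=> dG; exists (rk G) => i j; rewrite -parE; apply: (rk_lt dG). Qed.

Lemma score_equiv (R : realType) d k (Omega T : finType) (P : Omega -> R)
  (X : 'I_d -> Omega -> T) (G1 G2 : graph d) :
  is_dag k G1 -> is_dag k G2 -> markov_equiv G1 G2 ->
  score (cond_entropy P X) G1 = score (cond_entropy P X) G2.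
Proof.
move=> d1 d2 me; rewrite (score_pa _ d1) (score_pa _ d2); congr (- _).
rewrite /cond_entropy /=.
apply: chick; [exact: ranked_dag d1 | exact: ranked_dag d2 |].
have sk a b : adj G1 a b = adj G2 a b.
  apply/idP/idP; first exact: (skel_le d1 d2 me).
  exact: (skel_le d2 d1 (me_sym me)).
split => [a b | a w b]; first by rewrite !(padj_adj d1, padj_adj d2).
rewrite /pvs !(padj_adj d1, padj_adj d2) -!parE sk.
apply/and4P/and4P => [[ab aw bw na] | [ab aw bw na]].
  have /andP [] : collider G2 a w b.
    by apply: (vs_le d1 d2 me) => //; [rewrite sk | apply/andP].
  by move=> -> ->; split.
have /andP [] : collider G1 a w b.
  by apply: (vs_le d2 d1 (me_sym me)) => //; apply/andP.
by move=> -> ->; split.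
Qed.

End Link.

Section Emax.
Local Open Scope ring_scope.
Variables (R : realType) (d : nat).

Lemma emax_ge (Q : graph d -> Prop) (s : graph d -> R) G :
  Q G -> ((s G)%:E <= emax Q s)%E.
Proof.
move=> QG; rewrite /emax (bigD1 G) /=; last exact: asboolT.
by rewrite le_max lexx.
Qed.

Lemma emax_le (Q : graph d -> Prop) (s : graph d -> R) x :
  (forall G, Q G -> s G <= x) -> (emax Q s <= x%:E)%E.
Proof.
move=> H; rewrite /emax; apply: (big_ind (fun y => y <= x%:E)%E).
- exact: leNye.
- by move=> a b ha hb; rewrite ge_max ha hb.
- by move=> G /asboolP QG; rewrite lee_fin; apply: H.
Qed.

Lemma emax_eq (Q : graph d -> Prop) (s : graph d -> R) G :
  Q G -> (forall G', Q G' -> s G' <= s G) -> emax Q s = (s G)%:E.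
Proof.
by move=> QG H; apply/le_anti; rewrite emax_le // emax_ge.
Qed.

End Emax.

Definition G0 d : graph d := [set (i, (finset.set0 : {set 'I_d})) | i : 'I_d].

Lemma G0_dag d k : is_dag k (G0 d).
Proof.
apply/and3P; split.
- apply/forall_inP => f /imsetP [i _ ->].
  by rewrite /valid_fam /= inE cards0.
- apply/forallP => i; apply/cards1P; exists (i, finset.set0).
  apply/setP => f; rewrite !inE; apply/andP/eqP => [[/imsetP [j _ ->] /= /eqP -> //] | ->].
  by split => //; apply/imsetP; exists i.
- apply/forallP => i; apply/forallP => j; apply/implyP => /exists_inP [f /imsetP [l _ ->]] /=.
  by rewrite inE andbF.
Qed.

Lemma exists_opt (R : realType) d k (s : graph d -> R) :
  exists G, is_dag k G /\ forall G', is_dag k G' -> (s G' <= s G)%R.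
Proof.
have P0 : is_dag k (G0 d) by apply: G0_dag.
case: (@arg_maxP _ R _ (G0 d) (fun G => is_dag k G) s P0) => G dG Hmax.
by exists G; split => // G' dG'; apply: Hmax.
Qed.

Section Main.
Local Open Scope ring_scope.

Lemma bound (R : realType) d k (H Hh : fam d -> R) (A : graph d) (Gh Gs : graph d) (e : R) :
  Gj k A Gh -> Gj k A Gs -> score H Gh <= score H Gs ->
  (forall f, active_fam k (chld A) f -> `|Hh f - H f| <= e / 2) ->
  score Hh Gh - score Hh Gs <= (d - #|chld A|)%:R * e.
Proof.
case/andP => dh sh; case/andP => ds ss HS Hact.
move: HS; rewrite !(score_pa _ dh) !(score_pa _ ds) => HS.
set V := chld A.
have step i : Hh (i, paG Gs i) - Hh (i, paG Gh i) <=
    (H (i, paG Gs i) - H (i, paG Gh i)) + (if i \in V then 0 else e).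
  case: ifP => iV.
    have -> : paG Gs i = paG Gh i.
      case/imsetP: iV => g gA ->.
      have gh : g \in Gh by apply: (fintype.subsetP sh).
      have gs : g \in Gs by apply: (fintype.subsetP ss).
      have e1 := congr1 snd (dag_famE dh gh); have e2 := congr1 snd (dag_famE ds gs).
      by rewrite /= in e1 e2; rewrite -e1 -e2.
    by rewrite !subrr addr0.
  have a1 := Hact (i, paG Gs i); have a2 := Hact (i, paG Gh i).
  rewrite /active_fam /= iV andbT (dag_valid ds (dag_in ds i)) in a1.
  rewrite /active_fam /= iV andbT (dag_valid dh (dag_in dh i)) in a2.
  move: (a1 isT) (a2 isT); rewrite !ler_norml => /andP [b1 b2] /andP [b3 b4].
  lra.
have : \sum_i (Hh (i, paG Gs i) - Hh (i, paG Gh i)) <=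
    \sum_i ((H (i, paG Gs i) - H (i, paG Gh i)) + (if i \in V then 0 else e)).
  by apply: ler_sum => i _; apply: step.
rewrite sumrB big_split /= sumrB.
have -> : \sum_i (if i \in V then 0 else e) = \sum_(i in ~: V) e.
  by rewrite [RHS]big_mkcond; apply: eq_bigr => i _; rewrite finset.in_setC; case: (i \in V).
rewrite sumr_const.
have -> : #|~: V| = (d - #|V|)%N by have := cardsC V; rewrite card_ord; lia.
set a := \sum_i Hh _; set b := \sum_i Hh _; set c := \sum_i H _; set c' := \sum_i H _.
move: HS; rewrite -/c -/c' => h1 h2; rewrite -mulr_natl in h2; lra.
Qed.

End Main.

Unset Implicit Arguments.
Local Open Scope ring_scope.

Lemma me_refl d (G : graph d) : markov_equiv G G.
Proof. by move=> *; split. Qed.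

Theorem lemma2 (R : realType) (d k : nat) (Omega T : finType)
  (P : Omega -> R) (X : 'I_d -> Omega -> T) (eps eps1 : R)
  (Hhat : nat -> fam d -> R) (J : nat) (A : nat -> graph d)
  (rd : nat -> nat) (Ghat : nat -> graph d) :
  (0 < k)%N -> is_pmf P -> 0 < eps -> 0 < eps1 ->
  run_prefix k eps eps1 Hhat J A rd Ghat ->
  event_E k eps1 (cond_entropy P X) Hhat J A rd ->
  (1 <= J)%N ->
  exists G : graph d, Gj k (A J) G /\
    ((score (cond_entropy P X) G)%:E
      = emax (fun G' => is_dag k G') (score (cond_entropy P X)))%E.
Proof.
move=> k0 pmf eps0 eps10 [A1 rd1 wok step] EvE J1.
set H := cond_entropy P X.
have [Gopt [dopt Hopt]] := exists_opt k (score H).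
rewrite (emax_eq dopt Hopt).
suff : exists G, Gj k (A J) G /\ score H G = score H Gopt.
  by case=> G [? e]; exists G; rewrite e.
have rstart : forall j, (1 <= j < J)%N -> exists j0, [/\ (1 <= j0 <= j)%N, rd j0 = rd j,
    (j0 == 1%N) || (rd j0.-1 < rd j0)%N & A j0 \subset A j].
  elim => [//|j IH] /andP [j1 jJ].
  case: j IH j1 jJ => [|j] IH _ jJ; first by exists 1%N; split.
  have H1 : (1 <= j.+1 < J)%N by apply/andP; split => //; apply: ltnW.
  have [j0 [j0a j0b j0c j0d]] := IH H1.
  move: (step j.+1 H1) => /= [_ _ [[f [_ [Aeq req]]] | [_ [Aeq [req _]]]]].
    exists j0; split => //; first by move: j0a => /andP [-> /= ?]; apply: leqW.
      by rewrite req.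
    rewrite Aeq; apply: (fintype.subset_trans j0d); apply/fintype.subsetP => x xA.
    by rewrite in_setU1 xA orbT.
  exists j.+2; split => //; first by rewrite leqnn.
  by rewrite req /= ?ltnSn ?orbT.
have main : forall j, (1 <= j <= J)%N -> exists G, Gj k (A j) G /\ score H G = score H Gopt.
  elim => [//|j IH] /andP [j1 jJ].
  case: j IH j1 jJ => [|j] IH _ jJ.
    by exists Gopt; rewrite /Gj A1 dopt finset.sub0set.
  have H1 : (1 <= j.+1 <= J)%N by apply/andP; split => //; apply: ltnW.
  have H2 : (1 <= j.+1 < J)%N by apply/andP; split.
  have [Gs [GjS Sopt]] := IH H1.
  have dS : is_dag k Gs by case/andP: GjS.
  move: (step j.+1 H2) => /= [Gjh Hmaxh st].
  case: st => [[f [[inUh actf Hacc] [Aeq req]]] | [_ [Aeq _]]]; last first.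
    by exists Gs; rewrite Aeq.
  have [j0 [j0a j0b j0c j0d]] := rstart _ H2.
  have Hev : forall g, active_fam k (chld (A j.+1)) g ->
      `|Hhat (rd j.+1) g - H g| <= epst eps1 (rd j.+1) / 2.
    move=> g /andP [vg ng]; rewrite -j0b; apply: EvE => //.
      by move: j0a => /andP [-> /= ?]; apply: (leq_trans _ jJ); apply: leqW.
    rewrite /active_fam vg /=; apply: contra ng => hg.
    by apply: (fintype.subsetP (imsetS _ j0d)).
  have HS : score H (Ghat j.+1) <= score H Gs.
    by rewrite Sopt; apply: Hopt; case/andP: Gjh.
  have Hb := bound Gjh GjS HS Hev.
  have Hle := leeB (@emax_le R d (ec_j k (A j.+1) (Ghat j.+1)) (score (Hhat (rd j.+1)))
       (score (Hhat (rd j.+1)) (Ghat j.+1)) (fun G HG => Hmaxh G (proj1 HG)))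
     (@emax_ge R d (ec_j k (A j.+1) Gs) (score (Hhat (rd j.+1))) Gs (conj GjS (me_refl _ Gs))).
  have := Hacc Gs dS (ex_intro _ Gs (conj GjS (me_refl _ Gs))).
  case.
    apply: (le_trans Hle); rewrite -EFinB lee_fin; exact: Hb.
  move=> G' [[GjG' me] fG'].
  have dG' : is_dag k G' by case/andP: GjG'.
  exists G'; split.
    rewrite Aeq /Gj dG' /=; case/andP: GjG' => _ sG'.
    by rewrite finset.subUset sG' andbT finset.sub1set fG'.
  by rewrite -(score_equiv P X dS dG' me) Sopt.
have := main J; rewrite J1 leqnn; exact.
Qed.
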